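(* Let $\mathbb{E}$ be a finitely complete category, $\Sigma$ a fibrational class of split epimorphisms, and suppose $\mathbb{E}$ is a $\Sigma$-Mal'tsev category. Let $d_0,d_1\colon X_1\rightrightarrows X_0$, $s_0\colon X_0\to X_1$ be a reflexive graph. The following are equivalent: (1) the graph underlies a $\Sigma$-groupoid; (2) the kernel relation $R[d_0]$ is a $\Sigma$-relation and $[R[d_0],R[d_1]]=0$. Moreover, a reflexive relation $S$ on $X$ (with first projection $d_0\colon S\to X$) is a $\Sigma$-equivalence relation if and only if the kernel relation $R[d_0]$ of $d_0\colon S\to X$ is a $\Sigma$-relation.
   Context: A split epimorphism is a pair $(f,s)$ with $fs=1$. A class $\Sigma$ of split epimorphisms is fibrational if it contains all split epimorphisms $(f,s)$ with $f$ invertible and is stable under pullback along any morphism. A pair of morphisms with common codomain $Z$ is jointly extremally epic if it factors jointly through no non-invertible monomorphism into $Z$. $\mathbb{E}$ is $\Sigma$-Mal'tsev if for every split epimorphism $(f,s)\colon X\rightleftarrows Y$ in $\Sigma$ and every split epimorphism $(g,t)$ with $g\colon Y'\to Y$, letting $X'=Y'\times_YX$, $s'=(1_{Y'},sg)$, $\bar t=(tf,1_X)$, the pair $(s',\bar t)$ is jointly extremally epic. A $\Sigma$-relation is a reflexive relation $(d_0,d_1)\colon S\rightarrowtail X\times X$ with reflexivity $s_0$ such that $(d_0,s_0)\in\Sigma$; a $\Sigma$-equivalence relation is an equivalence relation which is a $\Sigma$-relation; a $\Sigma$-groupoid is an internal groupoid whose underlying reflexive graph $(d_0,d_1,s_0)$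 has $(d_0,s_0)\in\Sigma$. The kernel relation $R[f]$ of $f\colon A\to B$ is $A\times_BA$ with its two projections and the diagonal. For reflexive relations $R,S$ on $X$, $R\times_XS$ is the pullback of $d_0^S$ along $d_1^R$ (elements $xRySz$), $\sigma_0^R\colon R\to R\times_XS$, $xRy\mapsto xRySy$, and $\sigma_0^S\colon S\to R\times_XS$, $ySz\mapsto yRySz$. $[R,S]=0$ means there is a morphism $p\colon R\times_XS\to X$ with $p\sigma_0^R=d_0^R$ and $p\sigma_0^S=d_1^S$. *)

(* Defs.v *)
Set Implicit Arguments.
Unset Strict Implicit.

Record Cat := {
  Ob :> Type;
  Hom : Ob -> Ob -> Type;
  idm : forall A, Hom A A;
  comp : forall A B C, Hom B C -> Hom A B -> Hom A C;
  comp_id_l : forall A B (f : Hom A B), comp (idm B) f = f;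
  comp_id_r : forall A B (f : Hom A B), comp f (idm A) = f;
  comp_assoc : forall A B C D (f : Hom A B) (g : Hom B C) (h : Hom C D),
      comp h (comp g f) = comp (comp h g) f
}.

Arguments Hom {c} _ _.
Arguments idm {c} A.
Arguments comp {c A B C} _ _.
Notation "g ∘ f" := (comp g f) (at level 40, left associativity).

Section Basics.
Variable E : Cat.

Definition IsIso {A B : E} (f : Hom A B) : Prop :=
  exists g : Hom B A, f ∘ g = idm B /\ g ∘ f = idm A.

Definition Mono {A B : E} (m : Hom A B) : Prop :=
  forall T (u v : Hom T A), m ∘ u = m ∘ v -> u = v.

Record IsPullback {A B C P : E} (f : Hom A C) (g : Hom B C)
    (p1 : Hom P A) (p2 : Hom P B) : Prop := {
  pb_comm : f ∘ p1 = g ∘ p2;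
  pb_univ : forall T (a : Hom T A) (b : Hom T B), f ∘ a = g ∘ b ->
      exists! u : Hom T P, p1 ∘ u = a /\ p2 ∘ u = b
}.

Record Pb {A B C : E} (f : Hom A C) (g : Hom B C) := {
  pb_ob : E;
  pb_p1 : Hom pb_ob A;
  pb_p2 : Hom pb_ob B;
  pb_is : IsPullback f g pb_p1 pb_p2
}.

Definition IsTerminal (Z : E) : Prop :=
  forall X : E, exists t : Hom X Z, forall t' : Hom X Z, t' = t.

End Basics.

Arguments pb_ob {E A B C f g} _.
Arguments pb_p1 {E A B C f g} _.
Arguments pb_p2 {E A B C f g} _.

Record FinComplete (E : Cat) := {
  term : E;
  term_is : IsTerminal term;
  pb : forall (A B C : E) (f : Hom A C) (g : Hom B C), Pb f g
}.
Arguments pb {E} _ {A B C} f g.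

Definition SplitEpiClass (E : Cat) :=
  forall (X Y : E), Hom X Y -> Hom Y X -> Prop.

Section Sigma.
Variable E : Cat.
Variable L : FinComplete E.
Variable Sig : SplitEpiClass E.

Definition IsSplitEpiClass : Prop :=
  forall (X Y : E) (f : Hom X Y) (s : Hom Y X), Sig f s -> f ∘ s = idm Y.

Definition Fibrational : Prop :=
  (forall (X Y : E) (f : Hom X Y) (s : Hom Y X),
      f ∘ s = idm Y -> IsIso f -> Sig f s) /\
  (forall (X Y : E) (f : Hom X Y) (s : Hom Y X), Sig f s ->
   forall (Y' P : E) (g : Hom Y' Y) (p1 : Hom P Y') (p2 : Hom P X),
      IsPullback g f p1 p2 ->
      forall s' : Hom Y' P, p1 ∘ s' = idm Y' -> p2 ∘ s' = s ∘ g ->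
      Sig p1 s').

Definition JointlyExtremalEpic {A B Z : E} (a : Hom A Z) (b : Hom B Z) : Prop :=
  forall (M : E) (m : Hom M Z), Mono m ->
    (exists a' : Hom A M, m ∘ a' = a) ->
    (exists b' : Hom B M, m ∘ b' = b) -> IsIso m.

Definition SigmaMaltsev : Prop :=
  forall (X Y : E) (f : Hom X Y) (s : Hom Y X), Sig f s ->
  forall (Y' : E) (g : Hom Y' Y) (t : Hom Y Y'), g ∘ t = idm Y ->
  let P := pb L g f in
  forall (s' : Hom Y' (pb_ob P)) (tb : Hom X (pb_ob P)),
    pb_p1 P ∘ s' = idm Y' -> pb_p2 P ∘ s' = s ∘ g ->
    pb_p1 P ∘ tb = t ∘ f -> pb_p2 P ∘ tb = idm X ->
    JointlyExtremalEpic s' tb.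

Definition ReflRel {S X : E} (d0 d1 : Hom S X) (s0 : Hom X S) : Prop :=
  (forall T (u v : Hom T S), d0 ∘ u = d0 ∘ v -> d1 ∘ u = d1 ∘ v -> u = v) /\
  d0 ∘ s0 = idm X /\ d1 ∘ s0 = idm X.

Definition SigRel {S X : E} (d0 d1 : Hom S X) (s0 : Hom X S) : Prop :=
  ReflRel d0 d1 s0 /\ Sig d0 s0.

Definition EquivRel {S X : E} (d0 d1 : Hom S X) (s0 : Hom X S) : Prop :=
  ReflRel d0 d1 s0 /\
  (exists sigma : Hom S S, d0 ∘ sigma = d1 /\ d1 ∘ sigma = d0) /\
  (let P := pb L d1 d0 in
   exists tau : Hom (pb_ob P) S,
     d0 ∘ tau = d0 ∘ pb_p1 P /\ d1 ∘ tau = d1 ∘ pb_p2 P).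

Definition SigEquivRel {S X : E} (d0 d1 : Hom S X) (s0 : Hom X S) : Prop :=
  EquivRel d0 d1 s0 /\ Sig d0 s0.

Definition KernelSigRel {A B : E} (f : Hom A B) : Prop :=
  let K := pb L f f in
  exists delta : Hom A (pb_ob K),
    pb_p1 K ∘ delta = idm A /\ pb_p2 K ∘ delta = idm A /\
    SigRel (pb_p1 K) (pb_p2 K) delta.

Definition CommZero {R S X : E} (r0 r1 : Hom R X) (rs : Hom X R)
    (t0 t1 : Hom S X) (ts : Hom X S) : Prop :=
  let P := pb L r1 t0 in
  exists (p : Hom (pb_ob P) X) (sR : Hom R (pb_ob P)) (sS : Hom S (pb_ob P)),
    pb_p1 P ∘ sR = idm R /\ pb_p2 P ∘ sR = ts ∘ r1 /\
    pb_p1 P ∘ sS = rs ∘ t0 /\ pb_p2 P ∘ sS = idm S /\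
    p ∘ sR = r0 /\ p ∘ sS = t1.

Definition KernelCondition {X1 X0 : E} (d0 d1 : Hom X1 X0) : Prop :=
  let K0 := pb L d0 d0 in
  let K1 := pb L d1 d1 in
  exists (delta0 : Hom X1 (pb_ob K0)) (delta1 : Hom X1 (pb_ob K1)),
    pb_p1 K0 ∘ delta0 = idm X1 /\ pb_p2 K0 ∘ delta0 = idm X1 /\
    pb_p1 K1 ∘ delta1 = idm X1 /\ pb_p2 K1 ∘ delta1 = idm X1 /\
    SigRel (pb_p1 K0) (pb_p2 K0) delta0 /\
    CommZero (pb_p1 K0) (pb_p2 K0) delta0 (pb_p1 K1) (pb_p2 K1) delta1.

Definition ReflGraph {X1 X0 : E} (d0 d1 : Hom X1 X0) (s0 : Hom X0 X1) : Prop :=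
  d0 ∘ s0 = idm X0 /\ d1 ∘ s0 = idm X0.

(** internal groupoid structure on a reflexive graph; an arrow x goes from
    d0 x to d1 x; composable pairs (x,y) with d1 x = d0 y form the chosen
    pullback X2 of d1 and d0; m(x,y) : d0 x -> d1 y. *)
Definition IsGroupoid {X1 X0 : E} (d0 d1 : Hom X1 X0) (s0 : Hom X0 X1) : Prop :=
  ReflGraph d0 d1 s0 /\
  let P := pb L d1 d0 in
  let pi1 := pb_p1 P in
  let pi2 := pb_p2 P in
  exists (m : Hom (pb_ob P) X1) (i : Hom X1 X1),
    d0 ∘ m = d0 ∘ pi1 /\ d1 ∘ m = d1 ∘ pi2 /\
    (forall T (x : Hom T X1) (p : Hom T (pb_ob P)),
        pi1 ∘ p = s0 ∘ d0 ∘ x -> pi2 ∘ p = x -> m ∘ p = x) /\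
    (forall T (x : Hom T X1) (p : Hom T (pb_ob P)),
        pi1 ∘ p = x -> pi2 ∘ p = s0 ∘ d1 ∘ x -> m ∘ p = x) /\
    (forall T (p q r w : Hom T (pb_ob P)),
        pi2 ∘ p = pi1 ∘ r ->
        pi1 ∘ q = m ∘ p -> pi2 ∘ q = pi2 ∘ r ->
        pi1 ∘ w = pi1 ∘ p -> pi2 ∘ w = m ∘ r ->
        m ∘ q = m ∘ w) /\
    d0 ∘ i = d1 /\ d1 ∘ i = d0 /\
    (forall T (x : Hom T X1) (p : Hom T (pb_ob P)),
        pi1 ∘ p = x -> pi2 ∘ p = i ∘ x -> m ∘ p = s0 ∘ d0 ∘ x) /\
    (forall T (x : Hom T X1) (p : Hom T (pb_ob P)),
        pi1 ∘ p = i ∘ x -> pi2 ∘ p = x -> m ∘ p = s0 ∘ d1 ∘ x).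

Definition SigGroupoid {X1 X0 : E} (d0 d1 : Hom X1 X0) (s0 : Hom X0 X1) : Prop :=
  IsGroupoid d0 d1 s0 /\ Sig d0 s0.

End Sigma.

(* Main.v *)
Require Import Defs.
From Stdlib Require Import ClassicalEpsilon.

Section G.
Context {E : Cat}.

Lemma cx {A B C D : E} {f : Hom B C} {g : Hom A B} {h : Hom A C} :
  f ∘ g = h -> forall (x : Hom D A), f ∘ (g ∘ x) = h ∘ x.
Proof. intros H x. rewrite comp_assoc, H. reflexivity. Qed.

Lemma cx2 {A B C D F : E} {f : Hom C D} {g : Hom B C} {h : Hom A B} {k : Hom A D} :
  f ∘ (g ∘ h) = k -> forall (x : Hom F A), f ∘ (g ∘ (h ∘ x)) = k ∘ x.
Proof. intros H x. rewrite <- H. rewrite <- !comp_assoc. reflexivity. Qed.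

Lemma cx3 {A B C D F G : E} {f : Hom D F} {g : Hom C D} {h : Hom B C} {i : Hom A B} {k : Hom A F} :
  f ∘ (g ∘ (h ∘ i)) = k -> forall (x : Hom G A), f ∘ (g ∘ (h ∘ (i ∘ x))) = k ∘ x.
Proof. intros H x. rewrite <- H. rewrite <- !comp_assoc. reflexivity. Qed.

Lemma pb_uniq {A B C P : E} {f : Hom A C} {g : Hom B C} {p1 : Hom P A} {p2 : Hom P B}
  (H : IsPullback f g p1 p2) {T} (u v : Hom T P) :
  p1 ∘ u = p1 ∘ v -> p2 ∘ u = p2 ∘ v -> u = v.
Proof.
  intros H1 H2. destruct H as [c U].
  destruct (U T (p1 ∘ u) (p2 ∘ u)) as [w [_ Hw]] || destruct (U T (p1 ∘ u) (p2 ∘ u)) as [w [_ Hw]].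
  - rewrite !comp_assoc, c. reflexivity.
  - transitivity w; [symmetry|]; apply Hw; split; auto.
Qed.

Definition pr {A B C P : E} {f : Hom A C} {g : Hom B C} {p1 : Hom P A} {p2 : Hom P B}
  (H : IsPullback f g p1 p2) {T} (a : Hom T A) (b : Hom T B) (e : f ∘ a = g ∘ b) : Hom T P.
Proof.
  refine (proj1_sig (constructive_indefinite_description
     (fun u => p1 ∘ u = a /\ p2 ∘ u = b) _)).
  destruct (pb_univ H e) as [u [Hu _]]. exists u. exact Hu.
Defined.

Lemma pr_1 {A B C P : E} {f : Hom A C} {g : Hom B C} {p1 : Hom P A} {p2 : Hom P B}
  (H : IsPullback f g p1 p2) {T} (a : Hom T A) (b : Hom T B) (e : f ∘ a = g ∘ b) :
  p1 ∘ pr H a b e = a.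
Proof. unfold pr. destruct constructive_indefinite_description as [u [h1 h2]]. exact h1. Qed.
Lemma pr_2 {A B C P : E} {f : Hom A C} {g : Hom B C} {p1 : Hom P A} {p2 : Hom P B}
  (H : IsPullback f g p1 p2) {T} (a : Hom T A) (b : Hom T B) (e : f ∘ a = g ∘ b) :
  p2 ∘ pr H a b e = b.
Proof. unfold pr. destruct constructive_indefinite_description as [u [h1 h2]]. exact h2. Qed.
Lemma pr_1x {A B C P : E} {f : Hom A C} {g : Hom B C} {p1 : Hom P A} {p2 : Hom P B}
  (H : IsPullback f g p1 p2) {T} (a : Hom T A) (b : Hom T B) (e : f ∘ a = g ∘ b) {D} (x : Hom D T) :
  p1 ∘ (pr H a b e ∘ x) = a ∘ x.
Proof. apply cx, pr_1. Qed.
Lemma pr_2x {A B C P : E} {f : Hom A C} {g : Hom B C} {p1 : Hom P A} {p2 : Hom P B}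
  (H : IsPullback f g p1 p2) {T} (a : Hom T A) (b : Hom T B) (e : f ∘ a = g ∘ b) {D} (x : Hom D T) :
  p2 ∘ (pr H a b e ∘ x) = b ∘ x.
Proof. apply cx, pr_2. Qed.

End G.

Ltac ra := repeat rewrite <- comp_assoc; rewrite ?comp_id_l, ?comp_id_r.
Ltac rw1 H := ra; (rewrite H || rewrite (cx H) || rewrite (cx2 H) || rewrite (cx3 H)); ra.
Ltac rws H := repeat (rw1 H).
Ltac sp := ra; repeat ((rewrite pr_1 || rewrite pr_2 || rewrite pr_1x || rewrite pr_2x); ra).

Section S.
Context {E : Cat}.
Variable L : FinComplete E.
Variable Sig : SplitEpiClass E.

Lemma pb_sym {A B C P : E} {f : Hom A C} {g : Hom B C} {p1 : Hom P A} {p2 : Hom P B} :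
  IsPullback f g p1 p2 -> IsPullback g f p2 p1.
Proof.
  intros H. split.
  - symmetry. apply (pb_comm H).
  - intros T a b e. destruct (pb_univ H (eq_sym e)) as [u [[h1 h2] U]].
    exists u. split; [auto|]. intros u' [k1 k2]. apply U; auto.
Qed.

Lemma term_eq (X : E) (u v : Hom X (term L)) : u = v.
Proof. destruct (term_is L X) as [t Ht]. rewrite (Ht u), (Ht v). reflexivity. Qed.

Definition JMono {S A B : E} (a : Hom S A) (b : Hom S B) : Prop :=
  forall T (u v : Hom T S), a ∘ u = a ∘ v -> b ∘ u = b ∘ v -> u = v.

Lemma relsub {S A B P : E} (a : Hom S A) (b : Hom S B) (c : Hom P A) (d : Hom P B) :
  JMono a b ->
  exists (M : E) (m : Hom M P) (e : Hom M S), Mono m /\ a ∘ e = c ∘ m /\ b ∘ e = d ∘ m /\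
   forall Z (h : Hom Z P) (e' : Hom Z S), a ∘ e' = c ∘ h -> b ∘ e' = d ∘ h ->
     exists h', m ∘ h' = h.
Proof.
  intros J.
  destruct (term_is L A) as [tA _]. destruct (term_is L B) as [tB _].
  set (Pr := pb L tA tB). pose proof (pb_is Pr) as HPr.
  set (ab := pr HPr a b (term_eq _ _ _)).
  set (cd := pr HPr c d (term_eq _ _ _)).
  set (M := pb L cd ab). pose proof (pb_is M) as HM.
  assert (Ea : a ∘ pb_p2 M = c ∘ pb_p1 M).
  { transitivity (pb_p1 Pr ∘ (ab ∘ pb_p2 M)). unfold ab; sp; reflexivity.
    rewrite <- (pb_comm HM). unfold cd; sp; reflexivity. }
  assert (Eb : b ∘ pb_p2 M = d ∘ pb_p1 M).
  { transitivity (pb_p2 Pr ∘ (ab ∘ pb_p2 M)). unfold ab; sp; reflexivity.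
    rewrite <- (pb_comm HM). unfold cd; sp; reflexivity. }
  exists (pb_ob M), (pb_p1 M), (pb_p2 M). split; [|split; [|split]]; auto.
  - intros T u v H. apply (pb_uniq HM); auto. apply J.
    + rewrite !comp_assoc, Ea, <- !comp_assoc, H. reflexivity.
    + rewrite !comp_assoc, Eb, <- !comp_assoc, H. reflexivity.
  - intros Z h e' H1 H2.
    assert (Eq : cd ∘ h = ab ∘ e').
    { apply (pb_uniq HPr); unfold ab, cd; sp; auto. }
    exists (pr HM h e' Eq). apply pr_1.
Qed.

Lemma JE_eq {Y' X Q Z : E} (s' : Hom Y' Q) (tb : Hom X Q) (h1 h2 : Hom Q Z) :
  JointlyExtremalEpic s' tb -> h1 ∘ s' = h2 ∘ s' -> h1 ∘ tb = h2 ∘ tb -> h1 = h2.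
Proof.
  intros J H1 H2.
  destruct (relsub (idm Z) (idm Z) h1 h2) as [M [m [e [Mm [E1 [E2 U]]]]]].
  { intros T u v k _. rewrite !comp_id_l in k. exact k. }
  destruct (J M m Mm) as [k [k1 k2]].
  - apply (U _ s' (h1 ∘ s')); rewrite comp_id_l; auto.
  - apply (U _ tb (h1 ∘ tb)); rewrite comp_id_l; auto.
  - rewrite comp_id_l in E1, E2.
    rewrite <- (comp_id_r h1), <- (comp_id_r h2), <- k1, !comp_assoc, <- E1, <- E2. reflexivity.
Qed.

Lemma JE_fact {Y' X Q S A B : E} (s' : Hom Y' Q) (tb : Hom X Q)
  (a : Hom S A) (b : Hom S B) (c : Hom Q A) (d : Hom Q B) :
  JointlyExtremalEpic s' tb -> JMono a b ->
  (exists e1, a ∘ e1 = c ∘ s' /\ b ∘ e1 = d ∘ s') ->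
  (exists e2, a ∘ e2 = c ∘ tb /\ b ∘ e2 = d ∘ tb) ->
  exists e, a ∘ e = c /\ b ∘ e = d.
Proof.
  intros J Jm [e1 [f1 g1]] [e2 [f2 g2]].
  destruct (relsub a b c d Jm) as [M [m [e [Mm [E1 [E2 U]]]]]].
  destruct (J M m Mm) as [k [k1 k2]].
  - apply (U _ s' e1); auto.
  - apply (U _ tb e2); auto.
  - exists (e ∘ k). rewrite !comp_assoc, E1, E2, <- !comp_assoc, k1, !comp_id_r. auto.
Qed.

Variable HMal : SigmaMaltsev L Sig.

Lemma maltsev_gen {X Y : E} (f : Hom X Y) (s : Hom Y X) : Sig _ _ f s ->
  forall {Y'} (g : Hom Y' Y) (t : Hom Y Y'), g ∘ t = idm Y ->
  forall {Q} (q1 : Hom Q Y') (q2 : Hom Q X), IsPullback g f q1 q2 ->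
  forall (s' : Hom Y' Q) (tb : Hom X Q),
    q1 ∘ s' = idm Y' -> q2 ∘ s' = s ∘ g -> q1 ∘ tb = t ∘ f -> q2 ∘ tb = idm X ->
    JointlyExtremalEpic s' tb.
Proof.
  intros Hs Y' g t Hgt Q q1 q2 HQ s' tb e1 e2 e3 e4.
  set (P := pb L g f). pose proof (pb_is P) as HP.
  set (phi := pr HP q1 q2 (pb_comm HQ)).
  set (psi := pr HQ (pb_p1 P) (pb_p2 P) (pb_comm HP)).
  assert (I1 : psi ∘ phi = idm Q) by (apply (pb_uniq HQ); unfold psi, phi; sp; reflexivity).
  assert (I2 : phi ∘ psi = idm _) by (apply (pb_uniq HP); unfold psi, phi; sp; reflexivity).
  assert (J : JointlyExtremalEpic (phi ∘ s') (phi ∘ tb)).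
  { pose proof (HMal X Y f s Hs Y' g t Hgt) as HM; cbv zeta in HM. apply HM; unfold phi; sp; auto. }
  intros M m Mm [a' ha] [b' hb].
  destruct (J M (phi ∘ m)) as [k [k1 k2]].
  - intros T u v H. apply Mm.
    transitivity (psi ∘ (phi ∘ m ∘ u)). { rewrite !comp_assoc, I1, comp_id_l. reflexivity. }
    rewrite H, !comp_assoc, I1, comp_id_l. reflexivity.
  - exists a'. rewrite <- comp_assoc, ha. reflexivity.
  - exists b'. rewrite <- comp_assoc, hb. reflexivity.
  - exists (k ∘ phi). split.
    + transitivity (psi ∘ ((phi ∘ m) ∘ k) ∘ phi). { rewrite !comp_assoc, I1, comp_id_l. reflexivity. }
      rewrite k1, comp_id_r. exact I1.
    + rewrite <- comp_assoc. exact k2.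
Qed.

End S.
Section S2.
Variable E : Cat.
Variable L : FinComplete E.
Variable Sig : SplitEpiClass E.
Variable HFib : Fibrational Sig.

Lemma sig_base {X1 X0 : E} (d0 : Hom X1 X0) (s0 : Hom X0 X1) (Hds : d0 ∘ s0 = idm X0)
  (delta : Hom X1 (pb_ob (pb L d0 d0))) :
  pb_p1 (pb L d0 d0) ∘ delta = idm X1 -> pb_p2 (pb L d0 d0) ∘ delta = idm X1 ->
  Sig _ _ (pb_p1 (pb L d0 d0)) delta -> Sig _ _ d0 s0.
Proof.
  intros h1 h2 Hs. set (K := pb L d0 d0) in *. pose proof (pb_is K) as HK.
  destruct HFib as [_ HF].
  assert (e : d0 ∘ (s0 ∘ d0) = d0 ∘ idm X1) by (rw1 Hds; reflexivity).
  set (q := pr HK (s0 ∘ d0) (idm X1) e).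
  apply (HF _ _ _ _ Hs X0 X1 s0 d0 q).
  - split.
    + unfold q; sp; reflexivity.
    + intros T a b ab. exists (pb_p2 K ∘ b).
      assert (da : d0 ∘ (pb_p2 K ∘ b) = a).
      { rewrite comp_assoc, <- (pb_comm HK), <- comp_assoc, <- ab. rw1 Hds. reflexivity. }
      split; [split|].
      * exact da.
      * apply (pb_uniq HK); unfold q; sp; [|reflexivity]. rewrite da. exact ab.
      * intros u' [k1 k2]. rewrite <- k2. unfold q; sp. reflexivity.
  - exact Hds.
  - apply (pb_uniq HK); unfold q; sp; rws h1; rws h2; rws Hds; reflexivity.
Qed.

Lemma sig_swap {A B : E} (f : Hom A B) (delta : Hom A (pb_ob (pb L f f))) :
  pb_p1 (pb L f f) ∘ delta = idm A -> pb_p2 (pb L f f) ∘ delta = idm A ->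
  Sig _ _ (pb_p1 (pb L f f)) delta -> Sig _ _ (pb_p2 (pb L f f)) delta.
Proof.
  intros h1 h2 Hs. set (K := pb L f f) in *. pose proof (pb_is K) as HK.
  destruct HFib as [_ HF].
  set (sw := pr HK (pb_p2 K) (pb_p1 K) (eq_sym (pb_comm HK))).
  assert (ss : sw ∘ sw = idm _) by (apply (pb_uniq HK); unfold sw; sp; reflexivity).
  apply (HF _ _ _ _ Hs A (pb_ob K) (idm A) (pb_p2 K) sw).
  - split.
    + unfold sw; sp; reflexivity.
    + intros T a b ab. rewrite comp_id_l in ab. exists (sw ∘ b). split; [split|].
      * unfold sw; sp; auto.
      * rewrite comp_assoc, ss, comp_id_l. reflexivity.
      * intros u' [k1 k2]. rewrite <- k2, comp_assoc, ss, comp_id_l. reflexivity.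
  - exact h2.
  - apply (pb_uniq HK); unfold sw; sp; rws h1; rws h2; reflexivity.
Qed.
End S2.
Section S3.
Variable E : Cat.
Variable L : FinComplete E.
Variable Sig : SplitEpiClass E.
Variable HFib : Fibrational Sig.
Variable HMal : SigmaMaltsev L Sig.

Lemma part2 (S X : E) (d0 d1 : Hom S X) (s0 : Hom X S) :
  ReflRel d0 d1 s0 -> (SigEquivRel L Sig d0 d1 s0 <-> KernelSigRel L Sig d0).
Proof.
  intros R. destruct R as [J [ds0 ds1]]. split.
  - intros [[_ [[sigma [sg1 sg2]] Htau]] Hs]. cbv zeta in Htau.
    set (C := pb L d1 d0) in *. pose proof (pb_is C) as HC.
    destruct Htau as [tau [t1 t2]].
    unfold KernelSigRel. cbv zeta. set (K := pb L d0 d0). pose proof (pb_is K) as HK.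
    exists (pr HK (idm S) (idm S) eq_refl). split; [sp; reflexivity|split; [sp; reflexivity|]].
    split.
    { split; [|split; sp; reflexivity]. intros T u v. apply (pb_uniq HK). }
    destruct HFib as [_ HF].
    assert (e : d1 ∘ (sigma ∘ pb_p1 K) = d0 ∘ pb_p2 K) by (rws sg2; apply (pb_comm HK)).
    set (w := tau ∘ pr HC _ _ e).
    assert (W0 : d0 ∘ w = d1 ∘ pb_p1 K) by (unfold w; rws t1; sp; rws sg1; reflexivity).
    assert (W1 : d1 ∘ w = d1 ∘ pb_p2 K) by (unfold w; rws t2; sp; reflexivity).
    apply (HF _ _ _ _ Hs S (pb_ob K) d1 (pb_p1 K) w).
    + split; [symmetry; exact W0|].
      intros T a b ab. set (c := pr HC a b ab).
      assert (dk : d0 ∘ a = d0 ∘ (tau ∘ c)) by (rws t1; unfold c; sp; reflexivity).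
      set (k := pr HK a (tau ∘ c) dk).
      assert (wk : w ∘ k = b).
      { apply J.
        - rws W0. unfold k; sp. exact ab.
        - rws W1. unfold k; sp. rws t2. unfold c; sp. reflexivity. }
      exists k. split; [split; [unfold k; sp; reflexivity|exact wk]|].
      intros k' [k1 k2]. apply (pb_uniq HK).
      * rewrite k1. unfold k; sp; reflexivity.
      * apply J.
        -- rws (eq_sym (pb_comm HK)). rws k1. unfold k; sp. reflexivity.
        -- rws (eq_sym W1). rws k2. rws wk. reflexivity.
    + sp; reflexivity.
    + apply J.
      * rws W0. sp. rws ds0. reflexivity.
      * rws W1. sp. rws ds1. reflexivity.
  - unfold KernelSigRel. cbv zeta. set (K0 := pb L d0 d0). pose proof (pb_is K0) as HK0.
    intros [delta [h1 [h2 [_ Hs]]]].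
    split; [split; [split; auto|]|].
    2: { apply (@sig_base E L Sig HFib _ _ d0 s0 ds0 delta h1 h2 Hs). }
    set (K1 := pb L d1 d1). pose proof (pb_is K1) as HK1.
    set (delta1 := pr HK1 (idm S) (idm S) eq_refl).
    set (Q := pb L (pb_p2 K1) (pb_p1 K0)). pose proof (pb_is Q) as HQ.
    assert (e1 : pb_p2 K1 ∘ idm _ = pb_p1 K0 ∘ (delta ∘ pb_p2 K1)) by (rws h1; reflexivity).
    assert (e2 : pb_p2 K1 ∘ (delta1 ∘ pb_p1 K0) = pb_p1 K0 ∘ idm _) by (unfold delta1; sp; reflexivity).
    set (s' := pr HQ _ _ e1). set (tb := pr HQ _ _ e2).
    assert (JE : JointlyExtremalEpic s' tb).
    { eapply (@maltsev_gen E L Sig HMal _ _ (pb_p1 K0) delta Hs _ (pb_p2 K1) delta1 (ltac:(unfold delta1; sp; reflexivity)) _ _ _ HQ); unfold s', tb, delta1; sp; auto.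
      all: reflexivity. }
    destruct (@JE_fact E L _ _ _ _ _ _ s' tb d0 d1 (d0 ∘ pb_p1 K1 ∘ pb_p1 Q) (d1 ∘ pb_p2 K0 ∘ pb_p2 Q) JE J)
      as [ee [Ed0 Ed1]].
    { exists (pb_p1 K1). unfold s'; sp. rws h2. split; [reflexivity|apply (pb_comm HK1)]. }
    { exists (pb_p2 K0). unfold tb, delta1; sp. split; [symmetry; apply (pb_comm HK0)|reflexivity]. }
    split.
    + assert (a1 : d1 ∘ (s0 ∘ d1) = d1 ∘ idm S) by (rws ds1; reflexivity).
      assert (a0 : d0 ∘ idm S = d0 ∘ (s0 ∘ d0)) by (rws ds0; reflexivity).
      assert (a2 : pb_p2 K1 ∘ pr HK1 _ _ a1 = pb_p1 K0 ∘ pr HK0 _ _ a0) by (sp; reflexivity).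
      exists (ee ∘ pr HQ _ _ a2). split.
      * rws Ed0. sp. rws ds0. reflexivity.
      * rws Ed1. sp. rws ds1. reflexivity.
    + cbv zeta. set (C := pb L d1 d0). pose proof (pb_is C) as HC.
      assert (a1 : d1 ∘ pb_p1 C = d1 ∘ (s0 ∘ (d1 ∘ pb_p1 C))) by (rws ds1; reflexivity).
      assert (a0 : d0 ∘ (s0 ∘ (d1 ∘ pb_p1 C)) = d0 ∘ pb_p2 C) by (rws ds0; apply (pb_comm HC)).
      assert (a2 : pb_p2 K1 ∘ pr HK1 _ _ a1 = pb_p1 K0 ∘ pr HK0 _ _ a0) by (sp; reflexivity).
      exists (ee ∘ pr HQ _ _ a2). split.
      * rws Ed0. sp. reflexivity.
      * rws Ed1. sp. reflexivity.
Qed.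
End S3.
Section P1B.
Variable E : Cat.
Variable L : FinComplete E.
Variable Sig : SplitEpiClass E.
Variable HFib : Fibrational Sig.
Variable HMal : SigmaMaltsev L Sig.
Variables (X1 X0 : E) (d0 d1 : Hom X1 X0) (s0 : Hom X0 X1).
Hypotheses (ds0 : d0 ∘ s0 = idm X0) (ds1 : d1 ∘ s0 = idm X0).
Variables (delta0 : Hom X1 (pb_ob (pb L d0 d0))) (delta1 : Hom X1 (pb_ob (pb L d1 d1))).
Hypotheses (a1 : pb_p1 (pb L d0 d0) ∘ delta0 = idm X1) (a2 : pb_p2 (pb L d0 d0) ∘ delta0 = idm X1)
  (b1 : pb_p1 (pb L d1 d1) ∘ delta1 = idm X1) (b2 : pb_p2 (pb L d1 d1) ∘ delta1 = idm X1).
Hypothesis Hs0 : Sig _ _ (pb_p1 (pb L d0 d0)) delta0.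
Variables (p : Hom (pb_ob (pb L (pb_p2 (pb L d0 d0)) (pb_p1 (pb L d1 d1)))) X1)
  (sR : Hom (pb_ob (pb L d0 d0)) (pb_ob (pb L (pb_p2 (pb L d0 d0)) (pb_p1 (pb L d1 d1)))))
  (sS : Hom (pb_ob (pb L d1 d1)) (pb_ob (pb L (pb_p2 (pb L d0 d0)) (pb_p1 (pb L d1 d1))))).
Notation K0 := (pb L d0 d0).
Notation K1 := (pb L d1 d1).
Notation P := (pb L (pb_p2 (pb L d0 d0)) (pb_p1 (pb L d1 d1))).
Hypotheses (sR1 : pb_p1 P ∘ sR = idm _) (sR2 : pb_p2 P ∘ sR = delta1 ∘ pb_p2 K0)
  (sS1 : pb_p1 P ∘ sS = delta0 ∘ pb_p1 K1) (sS2 : pb_p2 P ∘ sS = idm _)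
  (psR : p ∘ sR = pb_p1 K0) (psS : p ∘ sS = pb_p2 K1).

Let HK0 := pb_is K0.
Let HK1 := pb_is K1.
Let HP := pb_is P.

Lemma Pv {T} (r : Hom T (pb_ob P)) : pb_p1 K1 ∘ (pb_p2 P ∘ r) = pb_p2 K0 ∘ (pb_p1 P ∘ r).
Proof. rewrite !comp_assoc, (pb_comm HP). reflexivity. Qed.

Lemma Puniq {T} (r r' : Hom T (pb_ob P)) :
  pb_p1 K0 ∘ (pb_p1 P ∘ r) = pb_p1 K0 ∘ (pb_p1 P ∘ r') ->
  pb_p2 K0 ∘ (pb_p1 P ∘ r) = pb_p2 K0 ∘ (pb_p1 P ∘ r') ->
  pb_p2 K1 ∘ (pb_p2 P ∘ r) = pb_p2 K1 ∘ (pb_p2 P ∘ r') -> r = r'.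
Proof.
  intros h1 h2 h3. apply (pb_uniq HP).
  - apply (pb_uniq HK0); ra; auto.
  - apply (pb_uniq HK1); ra; auto. rewrite !Pv. exact h2.
Qed.

Lemma mkP {T} (u v w : Hom T X1) : d0 ∘ u = d0 ∘ v -> d1 ∘ v = d1 ∘ w ->
  exists r, pb_p1 K0 ∘ (pb_p1 P ∘ r) = u /\ pb_p2 K0 ∘ (pb_p1 P ∘ r) = v /\
            pb_p2 K1 ∘ (pb_p2 P ∘ r) = w.
Proof.
  intros e0 e1.
  assert (e : pb_p2 K0 ∘ pr HK0 u v e0 = pb_p1 K1 ∘ pr HK1 v w e1) by (sp; reflexivity).
  exists (pr HP _ _ e). sp. auto.
Qed.

Lemma PUU {T} (r : Hom T (pb_ob P)) :
  pb_p2 K1 ∘ (pb_p2 P ∘ r) = pb_p2 K0 ∘ (pb_p1 P ∘ r) -> p ∘ r = pb_p1 K0 ∘ (pb_p1 P ∘ r).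
Proof.
  intros h. assert (Er : r = sR ∘ (pb_p1 P ∘ r)).
  { apply Puniq; rws sR1; rws sR2; rws b2; auto. }
  transitivity (p ∘ (sR ∘ (pb_p1 P ∘ r))); [f_equal; exact Er|]. rws psR. reflexivity.
Qed.

Lemma PVW {T} (r : Hom T (pb_ob P)) :
  pb_p1 K0 ∘ (pb_p1 P ∘ r) = pb_p2 K0 ∘ (pb_p1 P ∘ r) -> p ∘ r = pb_p2 K1 ∘ (pb_p2 P ∘ r).
Proof.
  intros h. assert (Er : r = sS ∘ (pb_p2 P ∘ r)).
  { apply Puniq; rws sS1; rws sS2; rws a1; rws a2; rewrite ?Pv; auto. }
  transitivity (p ∘ (sS ∘ (pb_p2 P ∘ r))); [f_equal; exact Er|]. rws psS. reflexivity.
Qed.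

Lemma JEP : JointlyExtremalEpic sS sR.
Proof.
  apply (@maltsev_gen E L Sig HMal _ _ (pb_p2 K0) delta0
     (@sig_swap E L Sig HFib _ _ d0 delta0 a1 a2 Hs0) _ (pb_p1 K1) delta1 b1 _ _ _
     (pb_sym HP) sS sR sS2 sS1 sR2 sR1).
Qed.

Lemma PD0 : d0 ∘ p = d0 ∘ (pb_p2 K1 ∘ pb_p2 P).
Proof.
  apply (@JE_eq E L _ _ _ _ sS sR _ _ JEP); ra.
  - rws psS. rws sS2. reflexivity.
  - rws psR. rws sR2. rws b2. apply (pb_comm HK0).
Qed.

Lemma PD1 : d1 ∘ p = d1 ∘ (pb_p1 K0 ∘ pb_p1 P).
Proof.
  apply (@JE_eq E L _ _ _ _ sS sR _ _ JEP); ra.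
  - rws psS. rws sS1. rws a1. symmetry. apply (pb_comm HK1).
  - rws psR. rws sR1. reflexivity.
Qed.

Lemma PA {T} (A B Cc D : Hom T (pb_ob P)) (u v w w' z : Hom T X1)
  (A1 : pb_p1 K0 ∘ (pb_p1 P ∘ A) = u) (A2 : pb_p2 K0 ∘ (pb_p1 P ∘ A) = v)
  (A3 : pb_p2 K1 ∘ (pb_p2 P ∘ A) = w)
  (B1 : pb_p1 K0 ∘ (pb_p1 P ∘ B) = w) (B2 : pb_p2 K0 ∘ (pb_p1 P ∘ B) = w')
  (B3 : pb_p2 K1 ∘ (pb_p2 P ∘ B) = z)
  (C1 : pb_p1 K0 ∘ (pb_p1 P ∘ Cc) = p ∘ A) (C2 : pb_p2 K0 ∘ (pb_p1 P ∘ Cc) = w')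
  (C3 : pb_p2 K1 ∘ (pb_p2 P ∘ Cc) = z)
  (D1 : pb_p1 K0 ∘ (pb_p1 P ∘ D) = u) (D2 : pb_p2 K0 ∘ (pb_p1 P ∘ D) = v)
  (D3 : pb_p2 K1 ∘ (pb_p2 P ∘ D) = p ∘ B) :
  p ∘ Cc = p ∘ D.
Proof.
  set (Y := pb L d1 (d1 ∘ (pb_p1 K0 ∘ pb_p1 P))). pose proof (pb_is Y) as HY.
  assert (eT : d1 ∘ idm X1 = d1 ∘ (pb_p1 K0 ∘ pb_p1 P) ∘ (sR ∘ delta0))
    by (ra; rws sR1; rws a1; reflexivity).
  set (t := pr HY _ _ eT).
  assert (Hgt : pb_p1 Y ∘ t = idm X1) by (unfold t; sp; reflexivity).
  set (Q := pb L (pb_p1 Y) (pb_p2 K0)). pose proof (pb_is Q) as HQ.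
  assert (e1 : pb_p1 Y ∘ idm _ = pb_p2 K0 ∘ (delta0 ∘ pb_p1 Y)) by (rws a2; reflexivity).
  assert (e2 : pb_p1 Y ∘ (t ∘ pb_p2 K0) = pb_p2 K0 ∘ idm _) by (unfold t; sp; reflexivity).
  set (s' := pr HQ _ _ e1). set (tb := pr HQ _ _ e2).
  assert (JE : JointlyExtremalEpic s' tb).
  { apply (@maltsev_gen E L Sig HMal _ _ (pb_p2 K0) delta0
     (@sig_swap E L Sig HFib _ _ d0 delta0 a1 a2 Hs0) _ (pb_p1 Y) t Hgt _ _ _ HQ);
    unfold s', tb; sp; reflexivity. }
  assert (qv : pb_p1 Y ∘ pb_p1 Q = pb_p2 K0 ∘ pb_p2 Q) by apply (pb_comm HQ).
  assert (qY : d1 ∘ pb_p1 Y = d1 ∘ (pb_p1 K0 ∘ (pb_p1 P ∘ pb_p2 Y)))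
    by (pose proof (pb_comm HY) as h; rewrite <- !comp_assoc in h; exact h).
  assert (k0c : d0 ∘ pb_p1 K0 = d0 ∘ pb_p2 K0) by apply (pb_comm HK0).
  assert (k1c : d1 ∘ pb_p1 K1 = d1 ∘ pb_p2 K1) by apply (pb_comm HK1).
  assert (f0 : d0 ∘ (pb_p1 K0 ∘ pb_p2 Q) = d0 ∘ (pb_p2 K0 ∘ pb_p2 Q)) by (rws k0c; reflexivity).
  assert (f1 : d1 ∘ (pb_p2 K0 ∘ pb_p2 Q) = d1 ∘ (pb_p1 K0 ∘ (pb_p1 P ∘ (pb_p2 Y ∘ pb_p1 Q)))).
  { rws (eq_sym qv). rws qY. reflexivity. }
  destruct (mkP _ _ _ f0 f1) as [AQ [AQ1 [AQ2 AQ3]]].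
  assert (g0 : d0 ∘ (p ∘ AQ) = d0 ∘ (pb_p2 K0 ∘ (pb_p1 P ∘ (pb_p2 Y ∘ pb_p1 Q)))).
  { rws PD0. rws AQ3. rws k0c. reflexivity. }
  assert (g1 : d1 ∘ (pb_p2 K0 ∘ (pb_p1 P ∘ (pb_p2 Y ∘ pb_p1 Q)))
             = d1 ∘ (pb_p2 K1 ∘ (pb_p2 P ∘ (pb_p2 Y ∘ pb_p1 Q)))).
  { rewrite <- Pv. rws k1c. reflexivity. }
  destruct (mkP _ _ _ g0 g1) as [CQ [CQ1 [CQ2 CQ3]]].
  assert (h1 : d1 ∘ (pb_p2 K0 ∘ pb_p2 Q) = d1 ∘ (p ∘ (pb_p2 Y ∘ pb_p1 Q))).
  { rewrite f1. rws PD1. reflexivity. }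
  destruct (mkP _ _ _ f0 h1) as [DQ [DQ1 [DQ2 DQ3]]].
  assert (H12 : p ∘ CQ = p ∘ DQ).
  { apply (@JE_eq E L _ _ _ _ s' tb _ _ JE); ra.
    - assert (cs : CQ ∘ s' = pb_p2 Y).
      { apply Puniq.
        - rws CQ1. rewrite PVW.
          + rws AQ3. unfold s'; sp. reflexivity.
          + rws AQ1. rws AQ2. unfold s'; sp. rws a1. rws a2. reflexivity.
        - rws CQ2. unfold s'; sp. reflexivity.
        - rws CQ3. unfold s'; sp. reflexivity. }
      rewrite cs. rewrite (PVW (DQ ∘ s')).
      + rws DQ3. unfold s'; sp. reflexivity.
      + rws DQ1. rws DQ2. unfold s'; sp. rws a1. rws a2. reflexivity.
    - assert (L1 : p ∘ (CQ ∘ tb) = pb_p1 K0).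
      { rewrite PUU.
        + rws CQ1. rewrite PUU.
          * rws AQ1. unfold tb; sp. reflexivity.
          * rws AQ3. rws AQ2. unfold tb, t; sp. rws sR1. rws a1. reflexivity.
        + rws CQ3. rws CQ2. unfold tb, t; sp. rws sR2. rws sR1. rws b2. rws a2. reflexivity. }
      assert (R1 : p ∘ (DQ ∘ tb) = pb_p1 K0).
      { rewrite PUU.
        * rws DQ1. unfold tb; sp. reflexivity.
        * rws DQ3. rws DQ2. unfold tb, t; sp. rws psR. rws a1. reflexivity. }
      rewrite L1, R1. reflexivity. }
  assert (dvw : d1 ∘ v = d1 ∘ w).
  { rewrite <- A2, <- A3, <- Pv. rws k1c. reflexivity. }
  assert (eY : d1 ∘ v = d1 ∘ (pb_p1 K0 ∘ pb_p1 P) ∘ B) by (ra; rewrite B1; exact dvw).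
  assert (eK : d0 ∘ u = d0 ∘ v) by (rewrite <- A1, <- A2; rws k0c; reflexivity).
  assert (eQ : pb_p1 Y ∘ pr HY _ _ eY = pb_p2 K0 ∘ pr HK0 _ _ eK) by (sp; reflexivity).
  set (xi := pr HQ _ _ eQ).
  assert (x1 : pb_p1 K0 ∘ (pb_p2 Q ∘ xi) = u) by (unfold xi; sp; reflexivity).
  assert (x2 : pb_p2 K0 ∘ (pb_p2 Q ∘ xi) = v) by (unfold xi; sp; reflexivity).
  assert (x3 : pb_p2 Y ∘ (pb_p1 Q ∘ xi) = B) by (unfold xi; sp; reflexivity).
  assert (Aeq : A = AQ ∘ xi).
  { apply Puniq; ra.
    - rws AQ1. rws x1. exact A1.
    - rws AQ2. rws x2. exact A2.
    - rws AQ3. rws x3. rewrite A3. symmetry. exact B1. }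
  assert (Ceq : Cc = CQ ∘ xi).
  { apply Puniq; ra.
    - rws CQ1. rewrite C1, Aeq. ra. reflexivity.
    - rws CQ2. rws x3. rewrite C2. symmetry. exact B2.
    - rws CQ3. rws x3. rewrite C3. symmetry. exact B3. }
  assert (Deq : D = DQ ∘ xi).
  { apply Puniq; ra.
    - rws DQ1. rws x1. exact D1.
    - rws DQ2. rws x2. exact D2.
    - rws DQ3. rws x3. exact D3. }
  rewrite Ceq, Deq, !comp_assoc, H12. reflexivity.
Qed.

Lemma Gpd : IsGroupoid L d0 d1 s0.
Proof.
  split; [split; auto|]. cbv zeta.
  set (C := pb L d1 d0). pose proof (pb_is C) as HC.
  assert (cc : d1 ∘ pb_p1 C = d0 ∘ pb_p2 C) by apply (pb_comm HC).
  assert (k0c : d0 ∘ pb_p1 K0 = d0 ∘ pb_p2 K0) by apply (pb_comm HK0).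
  assert (k1c : d1 ∘ pb_p1 K1 = d1 ∘ pb_p2 K1) by apply (pb_comm HK1).
  assert (f0 : d0 ∘ pb_p2 C = d0 ∘ (s0 ∘ (d1 ∘ pb_p1 C))) by (rws ds0; symmetry; exact cc).
  assert (f1 : d1 ∘ (s0 ∘ (d1 ∘ pb_p1 C)) = d1 ∘ pb_p1 C) by (rws ds1; reflexivity).
  destruct (mkP _ _ _ f0 f1) as [Phi [F1 [F2 F3]]].
  assert (g0 : d0 ∘ (s0 ∘ d0) = d0 ∘ idm X1) by (rws ds0; reflexivity).
  assert (g1 : d1 ∘ idm X1 = d1 ∘ (s0 ∘ d1)) by (rws ds1; reflexivity).
  destruct (mkP _ _ _ g0 g1) as [Psi [G1 [G2 G3]]].
  assert (m0 : d0 ∘ (p ∘ Phi) = d0 ∘ pb_p1 C) by (rws PD0; rws F3; reflexivity).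
  assert (m1 : d1 ∘ (p ∘ Phi) = d1 ∘ pb_p2 C) by (rws PD1; rws F1; reflexivity).
  assert (i0 : d0 ∘ (p ∘ Psi) = d1) by (rws PD0; rws G3; rws ds0; reflexivity).
  assert (i1 : d1 ∘ (p ∘ Psi) = d0) by (rws PD1; rws G1; rws ds1; reflexivity).
  exists (p ∘ Phi), (p ∘ Psi).
  split; [exact m0|]. split; [exact m1|].
  split.
  { intros T x q h1 h2. rewrite <- !comp_assoc in h1. ra. rewrite PUU.
    - rws F1. exact h2.
    - rws F3. rws F2. rewrite h1. rws ds1. reflexivity. }
  split.
  { intros T x q h1 h2. rewrite <- !comp_assoc in h2. ra. rewrite PVW.
    - rws F3. exact h1.
    - rws F1. rws F2. rewrite h2, h1. reflexivity. }
  split.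
  { intros T pp q r w h1 h2 h3 h4 h5. symmetry. ra.
    apply (PA (Phi ∘ r) (Phi ∘ pp) (Phi ∘ w) (Phi ∘ q) (pb_p2 C ∘ r) (s0 ∘ (d1 ∘ (pb_p1 C ∘ r)))
              (pb_p1 C ∘ r) (s0 ∘ (d1 ∘ (pb_p1 C ∘ pp))) (pb_p1 C ∘ pp)).
    all: try (rws F1); try (rws F2); try (rws F3); try reflexivity.
    - exact h1.
    - rewrite h5. ra. reflexivity.
    - rewrite h4. reflexivity.
    - exact h4.
    - exact h3.
    - rewrite h2. rws m1. rewrite h1. reflexivity.
    - rewrite h2. ra. reflexivity. }
  split; [exact i0|]. split; [exact i1|].
  split.
  { intros T x q h1 h2. rewrite <- !comp_assoc. ra.
    assert (e0 : d0 ∘ (s0 ∘ (d1 ∘ x)) = d0 ∘ (s0 ∘ (d1 ∘ x))) by reflexivity.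
    assert (e1 : d1 ∘ (s0 ∘ (d1 ∘ x)) = d1 ∘ x) by (rws ds1; reflexivity).
    destruct (mkP _ _ _ e0 e1) as [B [B1 [B2 B3]]].
    assert (pB : p ∘ B = x) by (rewrite PVW; [exact B3|rewrite B1, B2; reflexivity]).
    assert (e2 : d0 ∘ (s0 ∘ (d0 ∘ x)) = d0 ∘ x) by (rws ds0; reflexivity).
    assert (e3 : d1 ∘ x = d1 ∘ (p ∘ B)) by (rewrite pB; reflexivity).
    destruct (mkP _ _ _ e2 e3) as [D [D1 [D2 D3]]].
    transitivity (p ∘ D).
    - apply (PA (Psi ∘ x) B (Phi ∘ q) D (s0 ∘ (d0 ∘ x)) x (s0 ∘ (d1 ∘ x)) (s0 ∘ (d1 ∘ x)) x);
        auto; try (rws G1); try (rws G2); try (rws G3); try (rws F1); try (rws F2); try (rws F3);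
        try reflexivity.
      + rewrite h2. ra. reflexivity.
      + rewrite h1. reflexivity.
      + exact h1.
    - rewrite PUU; [exact D1|]. rewrite D3, D2. exact pB. }
  { intros T x q h1 h2. rewrite <- !comp_assoc. ra.
    assert (e0 : d0 ∘ x = d0 ∘ (s0 ∘ (d0 ∘ x))) by (rws ds0; reflexivity).
    assert (e1 : d1 ∘ (s0 ∘ (d0 ∘ x)) = d1 ∘ (s0 ∘ (d0 ∘ x))) by reflexivity.
    destruct (mkP _ _ _ e0 e1) as [A [A1 [A2 A3]]].
    assert (pA : p ∘ A = x) by (rewrite PUU; [exact A1|rewrite A3, A2; reflexivity]).
    assert (e2 : d0 ∘ (p ∘ A) = d0 ∘ x) by (rewrite pA; reflexivity).
    assert (e3 : d1 ∘ x = d1 ∘ (s0 ∘ (d1 ∘ x))) by (rws ds1; reflexivity).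
    destruct (mkP _ _ _ e2 e3) as [Cc [C1 [C2 C3]]].
    transitivity (p ∘ Cc).
    - symmetry.
      apply (PA A (Psi ∘ x) Cc (Phi ∘ q) x (s0 ∘ (d0 ∘ x)) (s0 ∘ (d0 ∘ x)) x (s0 ∘ (d1 ∘ x)));
        auto; try (rws G1); try (rws G2); try (rws G3); try (rws F1); try (rws F2); try (rws F3);
        try reflexivity.
      + exact h2.
      + rewrite h1. ra. rws i1. reflexivity.
      + rewrite h1. ra. reflexivity.
    - rewrite PVW; [exact C3|]. rewrite C1, C2. exact pA. }
Qed.

End P1B.
Section P1F.
Variable E : Cat.
Variable L : FinComplete E.
Variable Sig : SplitEpiClass E.
Variable HFib : Fibrational Sig.

Lemma part1f (X1 X0 : E) (d0 d1 : Hom X1 X0) (s0 : Hom X0 X1) :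
  ReflGraph d0 d1 s0 -> SigGroupoid L Sig d0 d1 s0 -> KernelCondition L Sig d0 d1.
Proof.
  intros [ds0 ds1] [[_ G] Hs]. cbv zeta in G.
  set (C := pb L d1 d0) in *. pose proof (pb_is C) as HC.
  destruct G as [m [i [m0 [m1 [ul [ur [asc [i0 [i1 [inv1 inv2]]]]]]]]]].
  assert (UL : forall T (x : Hom T X1) q, pb_p1 C ∘ q = s0 ∘ (d0 ∘ x) -> pb_p2 C ∘ q = x -> m ∘ q = x).
  { intros T x q h1 h2. apply ul; auto. rewrite <- comp_assoc. exact h1. }
  assert (UR : forall T (x : Hom T X1) q, pb_p1 C ∘ q = x -> pb_p2 C ∘ q = s0 ∘ (d1 ∘ x) -> m ∘ q = x).
  { intros T x q h1 h2. apply ur; auto. rewrite <- comp_assoc. exact h2. }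
  assert (INV1 : forall T (x : Hom T X1) q, pb_p1 C ∘ q = x -> pb_p2 C ∘ q = i ∘ x ->
            m ∘ q = s0 ∘ (d0 ∘ x)).
  { intros T x q h1 h2. rewrite comp_assoc. apply inv1; auto. }
  assert (INV2 : forall T (x : Hom T X1) q, pb_p1 C ∘ q = i ∘ x -> pb_p2 C ∘ q = x ->
            m ∘ q = s0 ∘ (d1 ∘ x)).
  { intros T x q h1 h2. rewrite comp_assoc. apply inv2; auto. }
  assert (cc : d1 ∘ pb_p1 C = d0 ∘ pb_p2 C) by apply (pb_comm HC).
  assert (F1 : forall T (al be : Hom T X1) r q, pb_p1 C ∘ r = al -> pb_p2 C ∘ r = be ->
     pb_p1 C ∘ q = i ∘ al -> pb_p2 C ∘ q = m ∘ r -> m ∘ q = be).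
  { intros T al be r q r1 r2 q1 q2.
    assert (ab : d1 ∘ al = d0 ∘ be) by (rewrite <- r1, <- r2; rws cc; reflexivity).
    assert (e1 : d1 ∘ (i ∘ al) = d0 ∘ al) by (rws i1; reflexivity).
    set (pp := pr HC _ _ e1).
    assert (e2 : d1 ∘ (m ∘ pp) = d0 ∘ be) by (rws m1; unfold pp; sp; exact ab).
    set (qq := pr HC _ _ e2).
    rewrite <- (asc T pp qq r q); unfold qq, pp; sp; auto.
    apply UL; sp; auto. rewrite (INV2 _ al); sp; auto. rewrite ab. reflexivity. }
  assert (F2 : forall T (al y : Hom T X1) r q, pb_p1 C ∘ r = i ∘ al -> pb_p2 C ∘ r = y ->
     pb_p1 C ∘ q = al -> pb_p2 C ∘ q = m ∘ r -> d0 ∘ al = d0 ∘ y -> m ∘ q = y).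
  { intros T al y r q r1 r2 q1 q2 ay.
    assert (e1 : d1 ∘ al = d0 ∘ (i ∘ al)) by (rws i0; reflexivity).
    set (pp := pr HC _ _ e1).
    assert (e2 : d1 ∘ (m ∘ pp) = d0 ∘ y) by (rws m1; unfold pp; sp; rws i1; exact ay).
    set (qq := pr HC _ _ e2).
    rewrite <- (asc T pp qq r q); unfold qq, pp; sp; auto.
    apply UL; sp; auto. rewrite (INV1 _ al); sp; auto. rewrite ay. reflexivity. }
  unfold KernelCondition. cbv zeta.
  set (K0 := pb L d0 d0). pose proof (pb_is K0) as HK0.
  set (K1 := pb L d1 d1). pose proof (pb_is K1) as HK1.
  assert (k0c : d0 ∘ pb_p1 K0 = d0 ∘ pb_p2 K0) by apply (pb_comm HK0).
  assert (k1c : d1 ∘ pb_p1 K1 = d1 ∘ pb_p2 K1) by apply (pb_comm HK1).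
  exists (pr HK0 (idm X1) (idm X1) eq_refl), (pr HK1 (idm X1) (idm X1) eq_refl).
  split; [sp; reflexivity|]. split; [sp; reflexivity|].
  split; [sp; reflexivity|]. split; [sp; reflexivity|].
  split.
  - split.
    { split; [intros T u v; apply (pb_uniq HK0)|split; sp; reflexivity]. }
    destruct HFib as [_ HF].
    assert (c0e : d1 ∘ (i ∘ pb_p1 K0) = d0 ∘ pb_p2 K0) by (rws i1; exact k0c).
    set (c0 := pr HC _ _ c0e). set (w := m ∘ c0).
    assert (W0 : d0 ∘ w = d1 ∘ pb_p1 K0) by (unfold w; rws m0; unfold c0; sp; rws i0; reflexivity).
    apply (HF _ _ _ _ Hs X1 (pb_ob K0) d1 (pb_p1 K0) w).
    + split; [symmetry; exact W0|].
      intros T al be ab. set (c := pr HC _ _ ab).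
      assert (dk : d0 ∘ al = d0 ∘ (m ∘ c)) by (rws m0; unfold c; sp; reflexivity).
      set (k := pr HK0 _ _ dk).
      assert (wk : w ∘ k = be).
      { unfold w; ra. apply (F1 _ al be c (c0 ∘ k)); unfold c0, k, c; sp; reflexivity. }
      exists k. split; [split; [unfold k; sp; reflexivity|exact wk]|].
      intros k' [q1 q2]. apply (pb_uniq HK0).
      * rewrite q1. unfold k; sp; reflexivity.
      * unfold k; sp.
        apply (F2 _ al (pb_p2 K0 ∘ k') (c0 ∘ k') c); unfold c0, c; sp; auto.
        -- rewrite q1. reflexivity.
        -- rewrite <- q2. unfold w. ra. reflexivity.
        -- rewrite <- q1. rws k0c. reflexivity.
    + sp; reflexivity.
    + unfold w; ra. rewrite (INV2 _ (idm X1) (c0 ∘ _)); unfold c0; sp; reflexivity.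
  - unfold CommZero. cbv zeta.
    set (P := pb L (pb_p2 K0) (pb_p1 K1)). pose proof (pb_is P) as HP.
    assert (pc : pb_p2 K0 ∘ pb_p1 P = pb_p1 K1 ∘ pb_p2 P) by apply (pb_comm HP).
    assert (ein : d1 ∘ (i ∘ (pb_p2 K0 ∘ pb_p1 P)) = d0 ∘ (pb_p1 K0 ∘ pb_p1 P))
      by (rws i1; rws k0c; reflexivity).
    set (inner := m ∘ pr HC _ _ ein).
    assert (eout : d1 ∘ (pb_p2 K1 ∘ pb_p2 P) = d0 ∘ inner).
    { unfold inner. rws m0. sp. rws i0. rws (eq_sym k1c). rws (eq_sym pc). reflexivity. }
    assert (esR : pb_p2 K0 ∘ idm _ = pb_p1 K1 ∘ (pr HK1 (idm X1) (idm X1) eq_refl ∘ pb_p2 K0))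
      by (sp; reflexivity).
    assert (esS : pb_p2 K0 ∘ (pr HK0 (idm X1) (idm X1) eq_refl ∘ pb_p1 K1) = pb_p1 K1 ∘ idm _)
      by (sp; reflexivity).
    exists (m ∘ pr HC _ _ eout), (pr HP _ _ esR), (pr HP _ _ esS).
    split; [sp; reflexivity|]. split; [sp; reflexivity|].
    split; [sp; reflexivity|]. split; [sp; reflexivity|].
    split.
    + ra. apply (F2 _ (pb_p2 K0) (pb_p1 K0) (pr HC _ _ ein ∘ pr HP _ _ esR)); unfold inner; sp; auto.
    + ra. apply UR; sp; [reflexivity|]. unfold inner. ra.
      rewrite (INV2 _ (pb_p1 K1)); sp; auto. rws k1c. reflexivity.
Qed.
End P1F.

Theorem proposition3p11 (E : Cat) (L : FinComplete E) (Sig : SplitEpiClass E)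
  (HSplit : IsSplitEpiClass Sig) (HFib : Fibrational Sig)
  (HMal : SigmaMaltsev L Sig) :
  (forall (X1 X0 : E) (d0 d1 : Hom X1 X0) (s0 : Hom X0 X1),
     ReflGraph d0 d1 s0 ->
     (SigGroupoid L Sig d0 d1 s0 <-> KernelCondition L Sig d0 d1)) /\
  (forall (S X : E) (d0 d1 : Hom S X) (s0 : Hom X S),
     ReflRel d0 d1 s0 ->
     (SigEquivRel L Sig d0 d1 s0 <-> KernelSigRel L Sig d0)).
Proof.
  split.
  - intros X1 X0 d0 d1 s0 RG. split.
    + apply (@part1f E L Sig HFib). exact RG.
    + intros KC. destruct RG as [ds0 ds1].
      unfold KernelCondition in KC. cbv zeta in KC.
      destruct KC as [delta0 [delta1 [a1 [a2 [b1 [b2 [[_ Hs0] CZ]]]]]]].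
      unfold CommZero in CZ. cbv zeta in CZ.
      destruct CZ as [p [sR [sS [sR1 [sR2 [sS1 [sS2 [psR psS]]]]]]]].
      split.
      * eapply Gpd; eauto.
      * exact (@sig_base E L Sig HFib _ _ d0 s0 ds0 delta0 a1 a2 Hs0).
  - intros S X d0 d1 s0 R. apply (@part2 E L Sig HFib HMal). exact R.
Qed.
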